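(* Fix real numbers $\{\Theta_{kj}\}_{k,j\in[K]}$. For $\mathbf{P}\in[0,1]^K$ and $(\boldsymbol{\alpha},\boldsymbol{\gamma})\in[-\pi,\pi)^{2K}$ let $\beta_{kj}=\cos^2(\alpha_j+\Theta_{kj}-\Theta_{jj}-\gamma_k)$ and $R_{sum}(\mathbf{P},\boldsymbol{\alpha},\boldsymbol{\gamma})=\sum_{k=1}^K\ln\!\left(1+\frac{P_k\beta_{kk}}{\sum_{j\ne k}P_j\beta_{kj}+\frac12}\right)$. Let $\mathcal{S}\subset[K]$ with $|\mathcal{S}|=s\ge 1$, and let $(\boldsymbol{\alpha},\boldsymbol{\gamma}),(\boldsymbol{\alpha}',\boldsymbol{\gamma}')\in[-\pi,\pi)^{2K}$ satisfy $\max_{k\in\mathcal{S}}\max(|\alpha_k-\alpha_k'|,|\gamma_k-\gamma_k'|)\le\frac{1}{2s^2}$. Then $$\left|R_{sum}(\mathbf{1}_{\mathcal{S}},\boldsymbol{\alpha},\boldsymbol{\gamma})-R_{sum}(\mathbf{1}_{\mathcal{S}},\boldsymbol{\alpha}',\boldsymbol{\gamma}')\right|\le 4,$$ where $\mathbf{1}_{\mathcal{S}}\in\{0,1\}^K$ has $k$-th component $1$ if $k\in\mathcal{S}$ and $0$ otherwise. *)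

(* Defs.v *)
(* concrete reals R. Indices [K] = {0,...,K-1}. *)
From Stdlib Require Import Reals List.
Import ListNotations.
Open Scope R_scope.

Definition sumK (K : nat) (f : nat -> R) : R :=
  fold_right Rplus 0 (map f (seq 0 K)).

Definition beta (Theta : nat -> nat -> R) (alpha gamma : nat -> R) (k j : nat) : R :=
  (cos (alpha j + Theta k j - Theta j j - gamma k)) ^ 2.

Definition Rsum (K : nat) (Theta : nat -> nat -> R) (P alpha gamma : nat -> R) : R :=
  sumK K (fun k =>
    ln (1 + P k * beta Theta alpha gamma k k /
            (sumK K (fun j => if Nat.eqb j k then 0
                              else P j * beta Theta alpha gamma k j) + /2))).

Definition indic (S : list nat) (k : nat) : R :=
  if in_dec Nat.eq_dec k S then 1 else 0.

Definition in_box (K : nat) (a : nat -> R) : Prop :=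
  forall k, (k < K)%nat -> -PI <= a k < PI.

(* Main.v *)
Require Import Defs.
From Stdlib Require Import Reals List Lra Lia.
Import ListNotations.
Open Scope R_scope.

Definition sumL (l : list nat) (f : nat -> R) : R := fold_right Rplus 0 (map f l).

Lemma sumL_minus l f g : sumL l f - sumL l g = sumL l (fun x => f x - g x).
Proof. induction l; unfold sumL in *; simpl; [ring|]. rewrite <- IHl; ring. Qed.

Lemma sumL_plus l f g : sumL l (fun x => f x + g x) = sumL l f + sumL l g.
Proof. induction l; unfold sumL in *; simpl; [ring|]. rewrite IHl; ring. Qed.

Lemma sumL_scal l c f : sumL l (fun x => c * f x) = c * sumL l f.
Proof. induction l; unfold sumL in *; simpl; [ring|]. rewrite IHl; ring. Qed.

Lemma sumL_abs l f g : (forall x, In x l -> Rabs (f x) <= g x) -> Rabs (sumL l f) <= sumL l g.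
Proof.
  induction l; intros H; unfold sumL in *; simpl.
  - rewrite Rabs_R0; lra.
  - eapply Rle_trans; [apply Rabs_triang|].
    apply Rplus_le_compat; [apply H; left; auto | apply IHl; intros; apply H; right; auto].
Qed.

Lemma sumL_le l f g : (forall x, In x l -> f x <= g x) -> sumL l f <= sumL l g.
Proof.
  induction l; intros H; unfold sumL in *; simpl; [lra|].
  apply Rplus_le_compat; [apply H; left; auto | apply IHl; intros; apply H; right; auto].
Qed.

Lemma sumL_nonneg l f : (forall x, 0 <= f x) -> 0 <= sumL l f.
Proof. intros H; induction l; unfold sumL in *; simpl; [lra|]. specialize (H a); lra. Qed.

Lemma sumL_drop l k g : (forall j, 0 <= g j) -> In k l ->
  sumL l (fun j => if Nat.eqb j k then 0 else g j) + g k <= sumL l g.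
Proof.
  intros Hg; induction l as [|a t IH]; intros Hin; [destruct Hin|].
  unfold sumL in *; simpl.
  destruct (Nat.eqb_spec a k).
  - subst. assert (fold_right Rplus 0 (map (fun j => if Nat.eqb j k then 0 else g j) t)
       <= fold_right Rplus 0 (map g t)).
    { apply (sumL_le t). intros x _. destruct (Nat.eqb x k); [apply Hg|lra]. }
    lra.
  - destruct Hin as [h|h]; [congruence|]. specialize (IH h). lra.
Qed.

Lemma sumL_eq_ind0 l a : ~ In a l -> sumL l (fun k => if Nat.eq_dec k a then 1 else 0) = 0.
Proof.
  induction l; intros H; unfold sumL in *; simpl; [lra|].
  destruct (Nat.eq_dec a0 a). { exfalso; apply H; left; auto. }
  rewrite IHl; [lra|]. intro; apply H; right; auto.
Qed.

Lemma sumL_eq_ind l a : NoDup l -> sumL l (fun k => if Nat.eq_dec k a then 1 else 0) <= 1.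
Proof.
  induction l; intros H; [unfold sumL; simpl; lra|].
  inversion H; subst.
  change (sumL (a0 :: l) (fun k => if Nat.eq_dec k a then 1 else 0)) with
    ((if Nat.eq_dec a0 a then 1 else 0) + sumL l (fun k => if Nat.eq_dec k a then 1 else 0)).
  destruct (Nat.eq_dec a0 a).
  - subst. rewrite sumL_eq_ind0; auto. lra.
  - specialize (IHl H3). lra.
Qed.

Lemma indic_bounds S k : 0 <= indic S k <= 1.
Proof. unfold indic; destruct (in_dec Nat.eq_dec k S); lra. Qed.

Lemma indic_cons a S k : indic (a :: S) k <= (if Nat.eq_dec k a then 1 else 0) + indic S k.
Proof.
  pose proof (indic_bounds S k).
  unfold indic in *.
  destruct (in_dec Nat.eq_dec k (a :: S)) as [h|h];
  destruct (Nat.eq_dec k a); destruct (in_dec Nat.eq_dec k S); try lra.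
  destruct h as [h|h]; [congruence|contradiction].
Qed.

Lemma sum_indic K S : sumL (seq 0 K) (indic S) <= INR (length S).
Proof.
  induction S as [|a S IH].
  - simpl. apply Rle_trans with (sumL (seq 0 K) (fun _ => 0)).
    + apply sumL_le. intros x _. unfold indic. destruct (in_dec Nat.eq_dec x []) as [h|h]; [destruct h|lra].
    + induction (seq 0 K); unfold sumL in *; simpl; lra.
  - apply Rle_trans with (sumL (seq 0 K) (fun k => (if Nat.eq_dec k a then 1 else 0) + indic S k)).
    + apply sumL_le. intros; apply indic_cons.
    + rewrite sumL_plus. simpl length. rewrite S_INR.
      pose proof (sumL_eq_ind (seq 0 K) a (seq_NoDup K 0)). lra.
Qed.

Lemma Rabs_sin_pos y : 0 < y -> Rabs (sin y) <= y.
Proof.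
  intros Hy. pose proof (sin_lt_x y Hy). pose proof (SIN_bound y).
  destruct (Rle_dec 1 y).
  - unfold Rabs; destruct (Rcase_abs (sin y)); lra.
  - pose proof PI2_1. pose proof (sin_gt_0 y Hy ltac:(lra)).
    rewrite Rabs_right; lra.
Qed.

Lemma Rabs_sin_le x : Rabs (sin x) <= Rabs x.
Proof.
  destruct (Rtotal_order x 0) as [h|[h|h]].
  - rewrite <- (Rabs_Ropp x), <- (Rabs_Ropp (sin x)), <- sin_neg.
    rewrite (Rabs_right (-x)) by lra. apply Rabs_sin_pos; lra.
  - subst; rewrite sin_0, Rabs_R0; lra.
  - rewrite (Rabs_right x) by lra. apply Rabs_sin_pos; lra.
Qed.

Lemma cos_lip p q : Rabs (cos p - cos q) <= Rabs (p - q).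
Proof.
  rewrite form2. rewrite !Rabs_mult.
  pose proof (Rabs_sin_le ((p - q) / 2)).
  pose proof (SIN_bound ((p + q) / 2)).
  assert (Rabs (sin ((p + q) / 2)) <= 1) by (unfold Rabs; destruct Rcase_abs; lra).
  assert (Rabs ((p - q) / 2) = Rabs (p - q) / 2) by (unfold Rabs; repeat destruct Rcase_abs; lra).
  assert (Rabs (-2) = 2) by (unfold Rabs; destruct Rcase_abs; lra).
  pose proof (Rabs_pos (sin ((p - q) / 2))).
  pose proof (Rabs_pos (sin ((p + q) / 2))).
  nra.
Qed.

Lemma cos_sq_lip x y : Rabs (cos x ^ 2 - cos y ^ 2) <= Rabs (x - y).
Proof.
  assert (cos x ^ 2 - cos y ^ 2 = (cos (2 * x) - cos (2 * y)) / 2)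
    by (rewrite !cos_2a_cos; field).
  rewrite H. pose proof (cos_lip (2 * x) (2 * y)).
  revert H0. unfold Rabs; repeat destruct Rcase_abs; lra.
Qed.

Lemma ln_half_diff x y : 0 < x -> 1/2 <= y -> ln x - ln y <= 2 * Rabs (x - y).
Proof.
  intros Hx Hy.
  assert (E : ln x - ln y = ln (x * / y)).
  { rewrite ln_mult by (try apply Rinv_0_lt_compat; lra). rewrite ln_Rinv by lra. ring. }
  pose proof (exp_ineq1_le (ln (x * / y))).
  rewrite exp_ln in H by (apply Rmult_lt_0_compat; [lra | apply Rinv_0_lt_compat; lra]).
  assert (Hi : y * / y = 1) by (field; lra).
  assert (Hp : 0 < / y) by (apply Rinv_0_lt_compat; lra).
  assert (Hb : / y <= 2) by nra.
  assert (x * / y - 1 = (x - y) * / y) by (field; lra).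
  pose proof (Rle_abs (x - y)). pose proof (Rabs_pos (x - y)).
  nra.
Qed.

Lemma ln_lip x y : 1/2 <= x -> 1/2 <= y -> Rabs (ln x - ln y) <= 2 * Rabs (x - y).
Proof.
  intros Hx Hy.
  pose proof (ln_half_diff x y ltac:(lra) Hy).
  pose proof (ln_half_diff y x ltac:(lra) Hx).
  rewrite Rabs_minus_sym in H0.
  unfold Rabs at 1; destruct Rcase_abs; lra.
Qed.

Lemma beta_lip Th al ga al' ga' k j :
  Rabs (beta Th al ga k j - beta Th al' ga' k j) <= Rabs (al j - al' j) + Rabs (ga k - ga' k).
Proof.
  unfold beta. eapply Rle_trans; [apply cos_sq_lip|].
  replace (al j + Th k j - Th j j - ga k - (al' j + Th k j - Th j j - ga' k))
    with ((al j - al' j) - (ga k - ga' k)) by ring.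
  unfold Rminus at 1. eapply Rle_trans; [apply Rabs_triang|]. rewrite Rabs_Ropp; lra.
Qed.

Lemma beta_bounds Th al ga k j : 0 <= beta Th al ga k j <= 1.
Proof.
  unfold beta. pose proof (COS_bound (al j + Th k j - Th j j - ga k)). nra.
Qed.

Lemma indic_in S k : In k S -> indic S k = 1.
Proof. intros h; unfold indic; destruct (in_dec Nat.eq_dec k S); [auto|contradiction]. Qed.

Lemma indic_notin S k : ~ In k S -> indic S k = 0.
Proof. intros h; unfold indic; destruct (in_dec Nat.eq_dec k S); [contradiction|auto]. Qed.

Lemma ln_split D b : 0 <= D -> 0 <= b -> ln (1 + 1 * b / (D + /2)) = ln (D + /2 + b) - ln (D + /2).
Proof.
  intros HD Hb.
  replace (1 + 1 * b / (D + /2)) with ((D + /2 + b) * / (D + /2)) by (field; lra).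
  rewrite ln_mult by (try apply Rinv_0_lt_compat; lra). rewrite ln_Rinv by lra. ring.
Qed.

Lemma ln_zero x y : ln (1 + 0 * x / y) = 0.
Proof. unfold Rdiv; rewrite !Rmult_0_l, Rplus_0_r; apply ln_1. Qed.

Theorem lemma4 (K : nat) (Theta : nat -> nat -> R)
  (S : list nat) (alpha gamma alpha' gamma' : nat -> R) :
  NoDup S ->
  (forall k, In k S -> (k < K)%nat) ->
  (1 <= length S)%nat ->
  in_box K alpha -> in_box K gamma -> in_box K alpha' -> in_box K gamma' ->
  (forall k, In k S ->
     Rmax (Rabs (alpha k - alpha' k)) (Rabs (gamma k - gamma' k))
       <= 1 / (2 * (INR (length S)) ^ 2)) ->
  Rabs (Rsum K Theta (indic S) alpha gamma - Rsum K Theta (indic S) alpha' gamma') <= 4.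
Proof.
  intros HND Hlt Hlen _ _ _ _ Hcl.
  assert (Hs : 1 <= INR (length S)) by (apply (le_INR 1); auto).
  set (s := INR (length S)) in *.
  set (c := 1 / s ^ 2).
  assert (Hc : c * s ^ 2 = 1) by (unfold c; field; lra).
  assert (Hc2 : 1 / (2 * s ^ 2) = c / 2) by (unfold c; field; lra).
  assert (Hc0 : 0 <= c).
  { unfold c, Rdiv. apply Rmult_le_pos; [lra|]. left; apply Rinv_0_lt_compat; nra. }
  assert (Hbeta : forall k j, In k S -> In j S ->
    Rabs (beta Theta alpha gamma k j - beta Theta alpha' gamma' k j) <= c).
  { intros k j hk hj. pose proof (beta_lip Theta alpha gamma alpha' gamma' k j).
    pose proof (Hcl k hk). pose proof (Hcl j hj).
    pose proof (Rmax_l (Rabs (alpha j - alpha' j)) (Rabs (gamma j - gamma' j))).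
    pose proof (Rmax_r (Rabs (alpha k - alpha' k)) (Rabs (gamma k - gamma' k))).
    lra. }
  set (F := fun al ga k => ln (1 + indic S k * beta Theta al ga k k /
            (sumL (seq 0 K) (fun j => if Nat.eqb j k then 0
                              else indic S j * beta Theta al ga k j) + /2))).
  change (Rsum K Theta (indic S) alpha gamma) with (sumL (seq 0 K) (F alpha gamma)).
  change (Rsum K Theta (indic S) alpha' gamma') with (sumL (seq 0 K) (F alpha' gamma')).
  assert (Hterm : forall k, In k (seq 0 K) ->
    Rabs (F alpha gamma k - F alpha' gamma' k) <= (4 * c * s) * indic S k).
  { intros k Hk. destruct (in_dec Nat.eq_dec k S) as [hk|hk].
    - rewrite (indic_in _ _ hk). unfold F. rewrite (indic_in _ _ hk).
      set (D := sumL (seq 0 K) (fun j => if Nat.eqb j k then 0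
                              else indic S j * beta Theta alpha gamma k j)).
      set (D' := sumL (seq 0 K) (fun j => if Nat.eqb j k then 0
                              else indic S j * beta Theta alpha' gamma' k j)).
      set (b := beta Theta alpha gamma k k).
      set (b' := beta Theta alpha' gamma' k k).
      assert (HD : 0 <= D).
      { apply sumL_nonneg; intros j. destruct (Nat.eqb j k); [lra|].
        pose proof (indic_bounds S j); pose proof (beta_bounds Theta alpha gamma k j); nra. }
      assert (HD' : 0 <= D').
      { apply sumL_nonneg; intros j. destruct (Nat.eqb j k); [lra|].
        pose proof (indic_bounds S j); pose proof (beta_bounds Theta alpha' gamma' k j); nra. }
      assert (Hb : 0 <= b) by apply beta_bounds.
      assert (Hb' : 0 <= b') by apply beta_bounds.
      rewrite !ln_split by auto.
      set (T := sumL (seq 0 K) (fun j => if Nat.eqb j k then 0 else indic S j)).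
      assert (HDD : Rabs (D - D') <= c * T).
      { unfold D, D', T. rewrite sumL_minus, <- sumL_scal. apply sumL_abs.
        intros j _. destruct (Nat.eqb j k).
        - rewrite Rminus_0_r, Rabs_R0; lra.
        - destruct (in_dec Nat.eq_dec j S) as [hj|hj].
          + rewrite !(indic_in _ _ hj). rewrite !Rmult_1_l, Rmult_1_r. apply Hbeta; auto.
          + rewrite !(indic_notin _ _ hj). rewrite !Rmult_0_l, Rmult_0_r, Rminus_0_r, Rabs_R0; lra. }
      assert (HT : T + 1 <= s).
      { pose proof (sumL_drop (seq 0 K) k (indic S) (fun j => proj1 (indic_bounds S j)) Hk).
        rewrite (indic_in _ _ hk) in H. pose proof (sum_indic K S). fold T in H. unfold s; lra. }
      assert (Hbb : Rabs (b - b') <= c) by (apply Hbeta; auto).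
      pose proof (ln_lip (D + /2 + b) (D' + /2 + b') ltac:(lra) ltac:(lra)).
      pose proof (ln_lip (D + /2) (D' + /2) ltac:(lra) ltac:(lra)).
      replace (D + /2 + b - (D' + /2 + b')) with ((D - D') + (b - b')) in H by ring.
      replace (D + /2 - (D' + /2)) with (D - D') in H0 by ring.
      pose proof (Rabs_triang (D - D') (b - b')).
      replace (ln (D + / 2 + b) - ln (D + / 2) - (ln (D' + / 2 + b') - ln (D' + / 2)))
        with ((ln (D + / 2 + b) - ln (D' + / 2 + b')) + - (ln (D + / 2) - ln (D' + / 2))) by ring.
      pose proof (Rabs_triang (ln (D + / 2 + b) - ln (D' + / 2 + b')) (- (ln (D + / 2) - ln (D' + / 2)))).
      rewrite Rabs_Ropp in H2.
      assert (c * T <= c * (s - 1)) by (apply Rmult_le_compat_l; lra).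
      lra.
    - rewrite (indic_notin _ _ hk). unfold F. rewrite (indic_notin _ _ hk).
      rewrite !ln_zero, Rminus_0_r, Rabs_R0. lra. }
  rewrite sumL_minus. eapply Rle_trans; [apply sumL_abs; exact Hterm|].
  rewrite (sumL_scal _ (4 * c * s) (indic S)).
  pose proof (sum_indic K S). fold s in H.
  assert (0 <= 4 * c * s) by (apply Rmult_le_pos; lra).
  apply Rle_trans with (4 * c * s * s); [apply Rmult_le_compat_l; lra|].
  nra.
Qed.
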